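(* Let $Z=\operatorname{diag}(z_1,\dots,z_N)$ with distinct real $z_i$, and let $\bm w_1,\bm w_2,\bm v_1\in\mathbb{R}^N$ satisfy $\bm w_1^T\bm v_1=1$, $\bm w_2^T\bm v_1=0$, $\bm w_2^TZ\bm v_1=1$. Run the following recursion: $b_0=\bm w_1^TZ\bm v_1$; $\bm v_2=Z\bm v_1-b_0\bm v_1$; $b_1=\bm w_2^TZ\bm v_2$, $c_1=\bm w_1^TZ\bm v_2$; $\bm v_3=Z\bm v_2-b_1\bm v_2-c_1\bm v_1$; $\hat{\bm w}_3=Z\bm w_1-c_1\bm w_2-b_0\bm w_1$; $d_2=\bm w_1^TZ\bm v_3$, $\bm w_3=\hat{\bm w}_3/d_2$; then for $n=3,\dots,N-1$: $b_{n-1}=\bm w_n^TZ\bm v_n$, $c_{n-1}=\bm w_{n-1}^TZ\bm v_n$, $\bm v_{n+1}=Z\bm v_n-b_{n-1}\bm v_n-c_{n-1}\bm v_{n-1}-d_{n-1}\bm v_{n-2}$, $\hat{\bm w}_{n+1}=Z\bm w_{n-1}-c_{n-1}\bm w_n-b_{n-2}\bm w_{n-1}-\bm w_{n-2}$, $d_n=\bm w_{n-1}^TZ\bm v_{n+1}$, $\bm w_{n+1}=\hat{\bm w}_{n+1}/d_n$; finally $b_{N-1}=\bm w_N^TZ\bm v_N$, $c_{N-1}=\bm w_{N-1}^TZ\bm v_N$. Suppose no breakdown occurs, i.e. $d_n\neq0$ for all $n=2,\dots,N-1$. Then the following inverse eigenvalue problem has a unique solution: find $W,V,H\in\mathbb{R}^{N\times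 N}$ with $H$ banded upper Hessenberg of the form $H_{i,i}=b_{i-1}$, $H_{i+1,i}=1$, $H_{i,i+1}=c_i$, $H_{i,i+2}=d_{i+1}$ (all other entries zero), such that (D1) the first two columns of $W$ are $\bm w_1,\bm w_2$ and the first column of $V$ is $\bm v_1$; (D2) $W^TV=I_N$; (D3) $W^TZV=H$. Moreover this solution is $W=[\bm w_1,\dots,\bm w_N]$, $V=[\bm v_1,\dots,\bm v_N]$ and $H$ with the coefficients produced by the recursion. *)

(* Defs.v *)
From mathcomp Require Import all_boot all_order all_algebra.
Set Implicit Arguments. Unset Strict Implicit. Unset Printing Implicit Defensive.
Import Order.TTheory GRing.Theory Num.Theory.
Local Open Scope ring_scope.

Definition dotv (R : ringType) (N : nat) (u v : 'cV[R]_N) : R := (u^T *m v) 0 0.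

Definition diagZ (R : ringType) (N : nat) (z : 'I_N -> R) : 'M[R]_N :=
  diag_mx (\row_i z i).

Section Recursion.
Variables (R : fieldType) (N : nat) (Z : 'M[R]_N) (w1 w2 v1 : 'cV[R]_N).

Definition b0 : R := dotv w1 (Z *m v1).
Definition v2 : 'cV[R]_N := Z *m v1 - b0 *: v1.
Definition b1 : R := dotv w2 (Z *m v2).
Definition c1 : R := dotv w1 (Z *m v2).
Definition v3 : 'cV[R]_N := Z *m v2 - b1 *: v2 - c1 *: v1.
Definition w3hat : 'cV[R]_N := Z *m w1 - c1 *: w2 - b0 *: w1.
Definition d2 : R := dotv w1 (Z *m v3).
Definition w3 : 'cV[R]_N := d2^-1 *: w3hat.

(* state at stage n >= 3:
   (v_{n-2}, v_{n-1}, v_n, w_{n-2}, w_{n-1}, w_n, b_{n-2}, d_{n-1}) *)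
Record St := MkSt {
  sV2 : 'cV[R]_N; sV1 : 'cV[R]_N; sV0 : 'cV[R]_N;
  sW2 : 'cV[R]_N; sW1 : 'cV[R]_N; sW0 : 'cV[R]_N;
  sB1 : R; sD0 : R }.

Definition st_init : St := MkSt v1 v2 v3 w1 w2 w3 b1 d2.

Definition st_step (s : St) : St :=
  let bn1 := dotv (sW0 s) (Z *m sV0 s) in
  let cn1 := dotv (sW1 s) (Z *m sV0 s) in
  let vnew := Z *m sV0 s - bn1 *: sV0 s - cn1 *: sV1 s - sD0 s *: sV2 s in
  let what := Z *m sW1 s - cn1 *: sW0 s - sB1 s *: sW1 s - sW2 s in
  let dn := dotv (sW1 s) (Z *m vnew) in
  MkSt (sV1 s) (sV0 s) vnew (sW1 s) (sW0 s) (dn^-1 *: what) bn1 dn.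

(* stage k corresponds to n = k + 3 *)
Fixpoint stage (k : nat) : St :=
  if k is k'.+1 then st_step (stage k') else st_init.

(* 1-based sequences v_n, w_n (index 0 is unused junk) *)
Definition vseq (n : nat) : 'cV[R]_N :=
  match n with 0 => 0 | 1 => v1 | 2 => v2 | k.+3 => sV0 (stage k) end.
Definition wseq (n : nat) : 'cV[R]_N :=
  match n with 0 => 0 | 1 => w1 | 2 => w2 | k.+3 => sW0 (stage k) end.

(* coefficients: b_m = w_{m+1}^T Z v_{m+1}, c_m = w_m^T Z v_{m+1},
   d_m = w_{m-1}^T Z v_{m+1} (these are exactly the formulas of the
   recursion for b_0..b_{N-1}, c_1..c_{N-1}, d_2..d_{N-1}) *)
Definition bseq (m : nat) : R := dotv (wseq m.+1) (Z *m vseq m.+1).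
Definition cseq (m : nat) : R := dotv (wseq m) (Z *m vseq m.+1).
Definition dseq (m : nat) : R := dotv (wseq m.-1) (Z *m vseq m.+1).

(* the matrices produced by the recursion (0-based indices i, j) *)
Definition Wrec : 'M[R]_N := \matrix_(k < N, i < N) wseq i.+1 k 0.
Definition Vrec : 'M[R]_N := \matrix_(k < N, i < N) vseq i.+1 k 0.
Definition Hrec : 'M[R]_N := \matrix_(i < N, j < N)
  if j == i :> nat then bseq j
  else if i == j.+1 :> nat then 1
  else if j == i.+1 :> nat then cseq j
  else if j == i.+2 :> nat then dseq j
  else 0.

End Recursion.

Definition banded_hess (R : ringType) (N : nat) (H : 'M[R]_N) : Prop :=
  forall i j : 'I_N,
    ((i : nat) = j.+1 -> H i j = 1) /\
    ((j.+1 < i)%N \/ (i.+2 < j)%N -> H i j = 0).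

(* Main.v *)
Require Import Defs.
From mathcomp Require Import all_boot all_order all_algebra zify ring.
Import Order.TTheory GRing.Theory Num.Theory.
Set Implicit Arguments. Unset Strict Implicit. Unset Printing Implicit Defensive.
Local Open Scope ring_scope.

Section Dot.
Variables (R : fieldType) (N : nat).
Implicit Types (u v x : 'cV[R]_N) (k : R).

Lemma dotvE u v : dotv u v = \sum_i u i 0 * v i 0.
Proof. by rewrite /dotv mxE; apply: eq_bigr => i _; rewrite mxE. Qed.
Lemma dotvDr u v x : dotv u (v + x) = dotv u v + dotv u x.
Proof. rewrite !dotvE -big_split; apply: eq_bigr => i _; by rewrite !mxE mulrDr. Qed.
Lemma dotvDl u v x : dotv (v + x) u = dotv v u + dotv x u.
Proof. rewrite !dotvE -big_split; apply: eq_bigr => i _; by rewrite !mxE mulrDl. Qed.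
Lemma dotvZr u v k : dotv u (k *: v) = k * dotv u v.
Proof. rewrite !dotvE mulr_sumr; apply: eq_bigr => i _; by rewrite !mxE mulrCA. Qed.
Lemma dotvZl u v k : dotv (k *: v) u = k * dotv v u.
Proof. rewrite !dotvE mulr_sumr; apply: eq_bigr => i _; by rewrite !mxE mulrA. Qed.
Lemma dotvNr u v : dotv u (- v) = - dotv u v.
Proof. by rewrite -scaleN1r dotvZr mulN1r. Qed.
Lemma dotvNl u v : dotv (- v) u = - dotv v u.
Proof. by rewrite -scaleN1r dotvZl mulN1r. Qed.
Lemma dotvBr u v x : dotv u (v - x) = dotv u v - dotv u x.
Proof. by rewrite dotvDr dotvNr. Qed.
Lemma dotvBl u v x : dotv (v - x) u = dotv v u - dotv x u.
Proof. by rewrite dotvDl dotvNl. Qed.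
Lemma dotv0r u : dotv u 0 = 0.
Proof. rewrite !dotvE big1 // => i _; by rewrite !mxE mulr0. Qed.
Lemma dotv0l u : dotv 0 u = 0.
Proof. rewrite !dotvE big1 // => i _; by rewrite !mxE mul0r. Qed.
Lemma dotvC u v : dotv u v = dotv v u.
Proof. by rewrite !dotvE; apply: eq_bigr => i _; rewrite mulrC. Qed.
Lemma dotvM (Z : 'M[R]_N) u v : Z^T = Z -> dotv (Z *m u) v = dotv u (Z *m v).
Proof. by move=> ZT; rewrite /dotv trmx_mul ZT mulmxA. Qed.

Lemma trmx_dot (A B : 'M[R]_N) i j : (A^T *m B) i j = dotv (col i A) (col j B).
Proof. rewrite dotvE mxE; apply: eq_bigr => k _; by rewrite !mxE. Qed.
End Dot.
Section Rec.
Variables (R : fieldType) (N : nat) (Z : 'M[R]_N) (w1 w2 v1 : 'cV[R]_N).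
Local Notation VV := (vseq Z w1 w2 v1).
Local Notation WW := (wseq Z w1 w2 v1).
Local Notation BB := (Defs.bseq Z w1 w2 v1).
Local Notation CC := (cseq Z w1 w2 v1).
Local Notation DD := (dseq Z w1 w2 v1).

Lemma stageE k : sV2 (stage Z w1 w2 v1 k) = VV k.+1 /\ sV1 (stage Z w1 w2 v1 k) = VV k.+2 /\
  sW2 (stage Z w1 w2 v1 k) = WW k.+1 /\ sW1 (stage Z w1 w2 v1 k) = WW k.+2 /\
  sB1 (stage Z w1 w2 v1 k) = BB k.+1 /\ sD0 (stage Z w1 w2 v1 k) = DD k.+2.
Proof.
elim: k => [|k [h1 [h2 [h3 [h4 [h5 h6]]]]]].
  by do !split.
simpl. split; first exact: h2. split; first done. split; first exact: h4.
split; first done. split; first done. rewrite {1}h4; reflexivity.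
Qed.

Lemma RV m : VV m.+2 = Z *m VV m.+1 - BB m *: VV m.+1 - CC m *: VV m - DD m *: VV m.-1.
Proof.
case: m => [|[|k]].
- by rewrite /= scaler0 !subr0.
- by rewrite /= scaler0 subr0.
- have [h1 [h2 [h3 [h4 [h5 h6]]]]] := stageE k.
  rewrite [LHS]/= h1 h2 h4 h6; reflexivity.
Qed.

Lemma RW m : (0 < m)%N ->
  WW m.+2 = (DD m.+1)^-1 *: (Z *m WW m - CC m *: WW m.+1 - BB m.-1 *: WW m - WW m.-1).
Proof.
case: m => [//|[|k]] _.
- by rewrite /= subr0.
- have [h1 [h2 [h3 [h4 [h5 h6]]]]] := stageE k.
  rewrite [LHS]/=; set vn := (Z *m sV0 (stage Z w1 w2 v1 k) - _ - _ - _).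
  rewrite h3 h4 h5; reflexivity.
Qed.

Lemma zm (V : zmodType) (x a b c : V) : x = x - a - b - c + a + b + c.
Proof. by rewrite (addrAC (x - a - b)) (addrAC (x - a)) subrK (addrAC (x - b)) !subrK. Qed.

Lemma RWinv m : (0 < m)%N -> DD m.+1 != 0 ->
  Z *m WW m = DD m.+1 *: WW m.+2 + CC m *: WW m.+1 + BB m.-1 *: WW m + WW m.-1.
Proof.
move=> m0 d0; rewrite RW // scalerA mulfV // scale1r; exact: zm.
Qed.
Lemma RVinv m : Z *m VV m.+1 = VV m.+2 + BB m *: VV m.+1 + CC m *: VV m + DD m *: VV m.-1.
Proof. rewrite RV; exact: zm. Qed.
End Rec.

Ltac decnat := repeat match goal with
 | |- context [?a == ?b] =>
     (have -> : (a == b) = true by lia) || (have -> : (a == b) = false by lia)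
 | |- context [leq ?a ?b] =>
     (have -> : (leq a b) = true by lia) || (have -> : (leq a b) = false by lia)
 end.

Ltac simpdelta := decnat; cbn [andb nat_of_bool]; rewrite ?mulr1n ?mulr0n ?mulr0 ?mulr1.

Ltac dotlin := rewrite ?dotvDr ?dotvNr ?dotvZr ?dotvDl ?dotvNl ?dotvZl ?dotv0r ?dotv0l.

Ltac zc := rewrite ?(addr0, add0r, subr0, sub0r, subrr, oppr0, mulr0, mul0r, mulr1, mul1r, opprK).
Ltac zclose := rewrite ?addr0 ?add0r ?subr0 ?sub0r ?subrr ?oppr0.

Section PartA.
Variables (R : fieldType) (N : nat) (Z : 'M[R]_N) (w1 w2 v1 : 'cV[R]_N).
Hypothesis ZT : Z^T = Z.
Hypothesis h11 : dotv w1 v1 = 1.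
Hypothesis h21 : dotv w2 v1 = 0.
Hypothesis h2Z1 : dotv w2 (Z *m v1) = 1.
Hypothesis hd : forall n : nat, (2 <= n <= N.-1)%N -> dseq Z w1 w2 v1 n != 0.
Local Notation VV := (vseq Z w1 w2 v1).
Local Notation WW := (wseq Z w1 w2 v1).
Local Notation BB := (Defs.bseq Z w1 w2 v1).
Local Notation CC := (cseq Z w1 w2 v1).
Local Notation DD := (dseq Z w1 w2 v1).

Definition delta (i j : nat) : R := ((i == j) && (0 < i)%N)%:R.

Definition E n := forall i j, (i <= n)%N -> (j <= n)%N -> dotv (WW i) (VV j) = delta i j.

Lemma E2 : E 2.
Proof.
move=> [|[|[|i]]] [|[|[|j]]] //= hi hj; rewrite /delta /=;
  rewrite ?dotv0l ?dotv0r ?h11 ?h21 //.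
- by rewrite /v2 dotvBr dotvZr h11 mulr1 /b0 subrr.
- by rewrite /v2 dotvBr dotvZr h21 mulr0 subr0 h2Z1.
Qed.

Lemma stepA q : (q.+3 <= N)%N -> E q.+2 -> E q.+3.
Proof.
move=> qN IH.
have d0 : DD q.+2 != 0 by apply hd; lia.
have ha : forall i, (i <= q.+2)%N -> dotv (WW i) (VV q.+3) = 0.
  case=> [|i] ile; first by rewrite [WW 0]/= dotv0l.
  rewrite (RV _ _ _ _ q.+1) !dotvBr !dotvZr !IH; try lia.
  rewrite /delta.
  have [->|n1] := eqVneq i q.+1.
    by simpdelta; rewrite ?subr0 ?sub0r; apply: subrr.
  have [->|n2] := eqVneq i q.
    by simpdelta; rewrite ?subr0 ?sub0r; apply: subrr.
  have [ei|n3] := eqVneq i.+1 q.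
    by subst q; simpdelta; rewrite ?subr0 ?sub0r; apply: subrr.
  simpdelta; rewrite !subr0 -dotvM // (@RWinv _ _ _ _ _ _ i.+1) //; last by apply hd; lia.
  dotlin; rewrite !IH; try lia.
  rewrite /delta; simpdelta; rewrite !addr0.
  by [].
have hb : forall j, (j <= q.+2)%N -> dotv (WW q.+3) (VV j) = 0.
  case=> [|j] jle; first by rewrite [VV 0]/= dotv0r.
  rewrite (@RW _ _ _ _ _ _ q.+1) // dotvZl.
  apply/eqP; rewrite mulf_eq0; apply/orP; right; apply/eqP.
  dotlin; rewrite dotvM // !IH; try lia.
  rewrite /delta.
  have [->|n1] := eqVneq j q.+1.
    by simpdelta; rewrite ?subr0 ?sub0r; apply: subrr.
  have [->|n2] := eqVneq j q.
    by simpdelta; rewrite ?subr0 ?sub0r; apply: subrr.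
  have [ej|n3] := eqVneq j.+1 q.
    subst q; simpdelta; rewrite (RVinv _ _ _ _ j); dotlin; rewrite !IH; try lia.
    rewrite /delta; simpdelta; by zclose.
  simpdelta; rewrite (RVinv _ _ _ _ j); dotlin; rewrite !IH; try lia.
  rewrite /delta; simpdelta; by zclose.
have hc : dotv (WW q.+3) (VV q.+3) = 1.
  rewrite (@RW _ _ _ _ _ _ q.+1) // dotvZl; dotlin; rewrite dotvM // !ha; try lia.
  rewrite ?mulr0 ?oppr0 ?addr0; exact: mulVf d0.
move=> i j hi hj.
have [->|ni] := eqVneq i q.+3.
  have [->|nj] := eqVneq j q.+3; first by rewrite hc /delta eqxx.
  rewrite hb; last lia.
  by rewrite /delta; simpdelta.
have [->|nj] := eqVneq j q.+3.
  by rewrite ha; [rewrite /delta; simpdelta | lia].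
rewrite IH //; lia.
Qed.

Lemma EN : E N.
Proof.
have key : forall n, (2 <= n <= maxn 2 N)%N -> E n.
  elim=> [|n IHn] hn; first by lia.
  have [->|n2] := eqVneq n.+1 2; first exact: E2.
  case: n IHn hn n2 => [|[|q]] IHn hn n2; try lia.
  apply: stepA; first lia.
  apply: IHn; lia.
move=> i j hi hj; apply: (key (maxn 2 N)); lia.
Qed.

Lemma KA1 j : (j.+2 <= N)%N -> dotv (WW j.+2) (Z *m VV j.+1) = 1.
Proof.
move=> hj; rewrite (RVinv _ _ _ _ j); dotlin; rewrite !EN; try lia.
by rewrite /delta; simpdelta; zc.
Qed.

Lemma KA2 i j : (i <= N)%N -> (j.+2 < i)%N -> dotv (WW i) (Z *m VV j.+1) = 0.
Proof.
move=> hi hj; rewrite (RVinv _ _ _ _ j); dotlin; rewrite !EN; try lia.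
by rewrite /delta; simpdelta; zc.
Qed.

Lemma KA3 i j : (0 < i)%N -> (j <= N)%N -> (i.+2 < j)%N -> dotv (WW i) (Z *m VV j) = 0.
Proof.
case: i => [//|i] _ hj hij.
rewrite -dotvM // (@RWinv _ _ _ _ _ _ i.+1) //; last by apply: hd; lia.
dotlin; rewrite !EN; try lia.
by rewrite /delta; simpdelta; zc.
Qed.
End PartA.

Section PartB.
Variables (R : fieldType) (N : nat) (Z : 'M[R]_N) (W V : 'M[R]_N).
Hypothesis ZT : Z^T = Z.
Hypothesis WV : W^T *m V = 1%:M.

Definition cf (A : 'M[R]_N) (k : nat) : 'cV[R]_N :=
  match k with 0 => 0 | k'.+1 =>
    match (insub k' : option 'I_N) with Some j => col j A | None => 0 end end.

Lemma cfS (A : 'M[R]_N) (j : 'I_N) : cf A j.+1 = col j A.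
Proof. by rewrite /= valK. Qed.

Lemma cfout (A : 'M[R]_N) k : (N < k)%N -> cf A k = 0.
Proof. case: k => [//|k] hk /=; rewrite insubF //; lia. Qed.

Lemma cfO (A : 'M[R]_N) k : (0 < k <= N)%N -> {j : 'I_N | k = j.+1}.
Proof. case: k => [//|k] hk; have hk' : (k < N)%N by lia. by exists (Ordinal hk'). Qed.

Lemma F1 i j : (i <= N)%N -> (j <= N)%N -> dotv (cf W i) (cf V j) = delta R i j.
Proof.
case: i => [|i] hi; first by rewrite /= dotv0l /delta andbF.
case: j => [|j] hj; first by rewrite [cf V 0]/= dotv0r /delta; simpdelta.
have hi' : (i < N)%N by lia. have hj' : (j < N)%N by lia.
rewrite (cfS W (Ordinal hi')) (cfS V (Ordinal hj')) -trmx_dot WV mxE /delta /=.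
have [e|ne] := eqVneq i j.
  have -> : (Ordinal hi' == Ordinal hj') by apply/eqP/val_inj.
  by rewrite e eqxx.
have -> : (Ordinal hi' == Ordinal hj') = false by apply/eqP => /(congr1 val) /= e; rewrite e eqxx in ne.
by simpdelta.
Qed.

Lemma injW x : (forall i, (0 < i <= N)%N -> dotv (cf W i) x = 0) -> x = 0.
Proof.
move=> h.
have h0 : W^T *m x = 0.
  apply/colP => a; rewrite [RHS]mxE; transitivity (dotv (cf W a.+1) x);
    last by apply: h; have := ltn_ord a; lia.
  rewrite cfS dotvE mxE; apply: eq_bigr => k _; by rewrite !mxE.
have VW : V *m W^T = 1%:M by apply: mulmx1C.
by rewrite -[x]mul1mx -VW -mulmxA h0 mulmx0.
Qed.

Lemma injV y : (forall j, (0 < j <= N)%N -> dotv y (cf V j) = 0) -> y = 0.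
Proof.
move=> h.
have h0 : V^T *m y = 0.
  apply/colP => a; rewrite [RHS]mxE; transitivity (dotv y (cf V a.+1));
    last by apply: h; have := ltn_ord a; lia.
  rewrite cfS dotvE mxE; apply: eq_bigr => k _; by rewrite !mxE mulrC.
have VW : V^T *m W = 1%:M by rewrite -[W]trmxK -trmx_mul WV trmx1.
have WV' : W *m V^T = 1%:M by apply: mulmx1C.
by rewrite -[y]mul1mx -WV' -mulmxA h0 mulmx0.
Qed.
End PartB.


Section PartC.
Variables (R : fieldType) (N : nat) (Z : 'M[R]_N) (w1 w2 v1 : 'cV[R]_N).
Hypothesis ZT : Z^T = Z.
Hypothesis hd : forall n : nat, (2 <= n <= N.-1)%N -> dseq Z w1 w2 v1 n != 0.
Variables (W V H : 'M[R]_N).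
Hypothesis hH : banded_hess H.
Hypothesis hW1 : forall i : 'I_N, (i : nat) = 0%N -> col i W = w1.
Hypothesis hW2 : forall i : 'I_N, (i : nat) = 1%N -> col i W = w2.
Hypothesis hV1 : forall i : 'I_N, (i : nat) = 0%N -> col i V = v1.
Hypothesis WV : W^T *m V = 1%:M.
Hypothesis WZV : W^T *m Z *m V = H.
Local Notation VV := (vseq Z w1 w2 v1).
Local Notation WW := (wseq Z w1 w2 v1).
Local Notation BB := (Defs.bseq Z w1 w2 v1).
Local Notation CC := (cseq Z w1 w2 v1).
Local Notation DD := (dseq Z w1 w2 v1).
Local Notation cW := (cf W).
Local Notation cV := (cf V).

Lemma KH (a b : 'I_N) : dotv (cW a.+1) (Z *m cV b.+1) = H a b.
Proof.
have e : Z *m col b V = col b (Z *m V) by rewrite !colE mulmxA.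
by rewrite !cfS e -trmx_dot -WZV mulmxA.
Qed.

Lemma cfz (A : 'M[R]_N) i : ~~ (0 < i <= N)%N -> cf A i = 0.
Proof. case: i => [//|i] hi; apply: cfout; lia. Qed.

Lemma HB0 i j : (j.+1 < i)%N \/ (i.+2 < j)%N -> dotv (cW i) (Z *m cV j) = 0.
Proof.
move=> hij.
case: (boolP (0 < i <= N)%N) => hi; last by rewrite cfz // dotv0l.
case: (boolP (0 < j <= N)%N) => hj; last by rewrite (cfz V hj) mulmx0 dotv0r.
have [a ea] := cfO W hi. have [b eb] := cfO V hj. subst i j.
rewrite KH; apply: (hH a b).2; lia.
Qed.

Lemma HB1 j : (0 < j)%N -> (j < N)%N -> dotv (cW j.+1) (Z *m cV j) = 1.
Proof.
move=> j0 jN.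
have hj : (0 < j <= N)%N by lia.
have [b eb] := cfO V hj. subst j.
have ha : (b.+1 < N)%N by lia.
have -> : (b.+2 = (Ordinal ha).+1)%N by [].
rewrite KH; apply: (hH _ b).1 => /=. done.
Qed.

Lemma uniq_cols n : (n <= N)%N -> forall k, (k <= n)%N -> cW k = WW k /\ cV k = VV k.
Proof.
elim: n => [|n IHn] hn k hk.
  by have -> : k = 0%N by lia.
have [kn|kn] := leqP k n; first by apply: IHn => //; lia.
have -> : k = n.+1 by lia.
have IH : forall k, (k <= n)%N -> cW k = WW k /\ cV k = VV k by apply: IHn; lia.
have hn' : (n < N)%N by lia.
case: n IHn hn IH hn' {k hk kn} => [|p] _ hn IH hn'.
  have e : cW 1 = col (Ordinal hn') W := cfS W (Ordinal hn').
  have e' : cV 1 = col (Ordinal hn') V := cfS V (Ordinal hn').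
  by rewrite e e' hW1 // hV1.
have [eW1 eV1] := IH p.+1 (leqnn _).
have [eW0 eV0] := IH p (leqnSn _).
have [eWm eVm] := IH p.-1 (leq_trans (leq_pred _) (leqnSn _)).
have eVn : cV p.+2 = VV p.+2.
  apply/eqP; rewrite -subr_eq0; apply/eqP; apply: (injW WV) => i hi.
  rewrite dotvBr (F1 WV); try lia.
  rewrite (RV _ _ _ _ p); dotlin.
  rewrite -eV1 -eV0 -eVm.
  have eB : BB p = dotv (cW p.+1) (Z *m cV p.+1) by rewrite /Defs.bseq eW1 eV1.
  have eC : CC p = dotv (cW p) (Z *m cV p.+1) by rewrite /cseq eW0 eV1.
  have eD : DD p = dotv (cW p.-1) (Z *m cV p.+1) by rewrite /dseq eWm eV1.
  rewrite eB eC eD !(F1 WV); try lia.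
  rewrite /delta.
  have [ee|n1] := eqVneq i p.+2.
  subst i;    by rewrite HB1 //; try lia; simpdelta; zc.
  have [ee|n2] := eqVneq i p.+1.
  subst i;    by simpdelta; zc.
  have [ee|n3] := eqVneq i p.
  subst i;    by simpdelta; zc.
  have [ee|n4] := eqVneq i p.-1.
  subst i;    by simpdelta; zc.
  rewrite (@HB0 i p.+1); last lia.
  by simpdelta; zc.
split => //.
case: p IH eW1 eV1 eW0 eV0 eWm eVm eVn hn hn' => [|q] IH eW1 eV1 eW0 eV0 eWm eVm eVn hn hn'.
  have h1 : (1 < N)%N by lia.
  have e : cW 2 = col (Ordinal h1) W := cfS W (Ordinal h1).
  by rewrite e hW2.
apply/eqP; rewrite -subr_eq0; apply/eqP; apply: (injV WV) => j hj.
rewrite dotvBl (F1 WV); try lia.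
rewrite (@RW _ _ _ _ _ _ q.+1) // dotvZl; dotlin; rewrite dotvM //.
rewrite -eW1 -eW0 -eWm.
have eB : BB q = dotv (cW q.+1) (Z *m cV q.+1) by rewrite /Defs.bseq eW0 eV0.
have eC : CC q.+1 = dotv (cW q.+1) (Z *m cV q.+2) by rewrite /cseq eW0 eV1.
have eD : DD q.+2 = dotv (cW q.+1) (Z *m cV q.+3) by rewrite /dseq eW0 eVn.
have dnz : dotv (cW q.+1) (Z *m cV q.+3) != 0 by rewrite -eD; apply: hd; lia.
rewrite eB eC eD !(F1 WV); try lia.
rewrite /delta.
have [ee|n1] := eqVneq j q.+3.
  subst j;  by simpdelta; zc; rewrite mulVf // subrr.
have [ee|n2] := eqVneq j q.+2.
  subst j;  by simpdelta; zc.
have [ee|n3] := eqVneq j q.+1.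
  subst j;  by simpdelta; zc.
have [ee|n4] := eqVneq j q.
  subst j;  by rewrite HB1 //; try lia; simpdelta; zc.
rewrite (@HB0 q.+1 j); last lia.
by simpdelta; zc.
Qed.
End PartC.

Lemma colWrec (R : fieldType) N (Z : 'M[R]_N) w1 w2 v1 (i : 'I_N) :
  col i (Wrec Z w1 w2 v1) = wseq Z w1 w2 v1 i.+1.
Proof. by apply/colP => r; rewrite !mxE. Qed.
Lemma colVrec (R : fieldType) N (Z : 'M[R]_N) w1 w2 v1 (i : 'I_N) :
  col i (Vrec Z w1 w2 v1) = vseq Z w1 w2 v1 i.+1.
Proof. by apply/colP => r; rewrite !mxE. Qed.

Unset Implicit Arguments.
Set Strict Implicit.

Theorem proposition4p2 (R : realFieldType) (N : nat) (z : 'I_N -> R)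
    (w1 w2 v1 : 'cV[R]_N) :
  injective z ->
  dotv w1 v1 = 1 ->
  dotv w2 v1 = 0 ->
  dotv w2 (diagZ z *m v1) = 1 ->
  (forall n : nat, (2 <= n <= N.-1)%N -> dseq (diagZ z) w1 w2 v1 n != 0) ->
  forall W V H : 'M[R]_N,
    (banded_hess H /\
     ((forall i : 'I_N, (i : nat) = 0%N -> col i W = w1) /\
      (forall i : 'I_N, (i : nat) = 1%N -> col i W = w2) /\
      (forall i : 'I_N, (i : nat) = 0%N -> col i V = v1)) /\
     W^T *m V = 1%:M /\
     W^T *m diagZ z *m V = H)
    <->
    (W = Wrec (diagZ z) w1 w2 v1 /\ V = Vrec (diagZ z) w1 w2 v1 /\
     H = Hrec (diagZ z) w1 w2 v1).
Proof.
move=> _ h11 h21 h2Z1 hd W V H.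
set Z := diagZ z.
have ZT : Z^T = Z by rewrite /Z /diagZ tr_diag_mx.
split.
  move=> [hH [[hW1 [hW2 hV1]] [WV WZV]]].
  have UC := uniq_cols ZT hd hH hW1 hW2 hV1 WV WZV (leqnn N).
  have eW : W = Wrec Z w1 w2 v1.
    apply/matrixP => r k; rewrite mxE.
    have [e _] := UC k.+1 (ltn_ord k).
    by have := congr1 (fun c : 'cV[R]_N => c r 0) e; rewrite cfS mxE.
  have eV : V = Vrec Z w1 w2 v1.
    apply/matrixP => r k; rewrite mxE.
    have [_ e] := UC k.+1 (ltn_ord k).
    by have := congr1 (fun c : 'cV[R]_N => c r 0) e; rewrite cfS mxE.
  split; first done. split; first done.
  have KH' : forall a b : 'I_N, H a b = dotv (wseq Z w1 w2 v1 a.+1) (Z *m vseq Z w1 w2 v1 b.+1).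
    move=> a b; rewrite -(KH WZV) (UC a.+1 (ltn_ord a)).1 (UC b.+1 (ltn_ord b)).2 //.
  apply/matrixP => i j; rewrite mxE.
  case: eqP => [e|n1]; first by rewrite KH' e.
  case: eqP => [e|n2]; first by apply: (hH i j).1.
  case: eqP => [e|n3]; first by rewrite KH' /cseq e.
  case: eqP => [e|n4]; first by rewrite KH' /dseq e.
  apply: (hH i j).2; lia.
move=> [-> [-> ->]].
split.
  move=> i j; split => h; rewrite mxE.
    by decnat.
  by decnat.
split.
  split; first by move=> i hi; rewrite colWrec hi.
  split; first by move=> i hi; rewrite colWrec hi.
  by move=> i hi; rewrite colVrec hi.
split.
  apply/matrixP => i j; rewrite trmx_dot colWrec colVrec (EN ZT h11 h21 h2Z1 hd) //.
  by rewrite /delta mxE /= andbT.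
have EA := EN ZT h11 h21 h2Z1 hd.
apply/matrixP => i j; rewrite -mulmxA trmx_dot.
have -> : col j (Z *m Vrec Z w1 w2 v1) = Z *m vseq Z w1 w2 v1 j.+1.
  by rewrite colE -mulmxA -colE colVrec.
rewrite colWrec mxE.
have hi := ltn_ord i. have hj := ltn_ord j.
case: eqP => [e|n1]; first by rewrite /Defs.bseq e.
case: eqP => [e|n2]; first by rewrite e (KA1 ZT h11 h21 h2Z1 hd) //; lia.
case: eqP => [e|n3]; first by rewrite /cseq e.
case: eqP => [e|n4]; first by rewrite /dseq e.
have [lt|lt] : (j.+1 < i)%N \/ (i.+2 < j)%N by lia.
  by rewrite (KA2 ZT h11 h21 h2Z1 hd) //; lia.
by rewrite (KA3 ZT h11 h21 h2Z1 hd) //; lia.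
Qed.
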